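(* For all objects $\mathcal{L}_1,\mathcal{L}_2$ of $\mathbf{Cal^0_{Sym}}$ there are isomorphisms in $\mathbf{Chu}_{2_0}$ $$\alpha_{\mathcal{L}_1\mathcal{L}_2}:\mathcal{F}(\mathcal{L}_1)\otimes_C\mathcal{F}(\mathcal{L}_2)\to\mathcal{F}(\mathcal{L}_1\circledast\mathcal{L}_2),$$ natural in $\mathcal{L}_1$ and $\mathcal{L}_2$, i.e. $\mathcal{F}(f_1\circledast f_2)\circ\alpha=\alpha\circ(\mathcal{F}(f_1)\otimes_C\mathcal{F}(f_2))$ for all arrows $f_1,f_2$ of $\mathbf{Cal^0_{Sym}}$. Consequently, the full subcategory of $\mathbf{Chu}_{2_0}$ consisting of objects isomorphic to objects in the image of $\mathcal{F}$ is closed under $\otimes_C$.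
   Context: Lattice notation: $\Sigma_i,\Sigma_i'$ atoms and coatoms of $\mathcal{L}_i$; $\Sigma[a]$, $\Sigma'[a]$; $\mathsf{Cl}(\omega)=\{\Sigma[a];a\in\omega\}$; $f^\circ(b):=\bigvee\{a;f(a)\le b\}$. $\mathbf{Cal^0_{Sym}}$: objects are complete atomistic coatomistic lattices with $\Sigma[x]\cup\Sigma[y]\ne\Sigma$ for all coatoms $x,y$ and $\Sigma'[p]\cup\Sigma'[q]\ne\Sigma'$ for all atoms $p,q$; arrows preserve arbitrary joins, send atoms to atoms or $0$, with $f^\circ$ sending coatoms to coatoms or $1$. $\mathcal{L}_1\circledast\mathcal{L}_2:=\{\bigcap\omega;\omega\subseteq\Sigma'_\circledast\cup\{\Sigma_1\times\Sigma_2\}\}$ where $\Sigma'_\circledast$ is the set of $R\subsetneqq\Sigma_1\times\Sigma_2$ with $\{q_1;(q_1,p_2)\in R\}\in\mathsf{Cl}(\Sigma_1'\cup\{1\})$ and $\{q_2;(p_1,q_2)\in R\}\in\mathsf{Cl}(\Sigma_2'\cup\{1\})$ for all $(p_1,p_2)$; $f_1\circledast f_2$ is the join-preserving map sending the atom $\{(p_1,p_2)\}$ to $\{(f_1(p_1),f_2(p_2))\}$ if both are nonzero and to $0$ otherwise. $\mathbf{Chu}_{2_0}$: objects $(A,r,X)$ with $A,X$ pointed sets, $r:A\times X\to\{0,1\}$ vanishing at base points; arrows $(f,g):(A,r,X)\to(B,s,Y)$, pointed $f:A\to B$, $g:Y\to X$, $s(f(a),y)=r(a,g(y))$; composition $(f',g')\circ(f,g)=(f'\circ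 f,g\circ g')$. $(A,r,X)^\perp=(X,\check r,A)$. Smash product $A\wedge B:=((A\setminus\{0_A\})\times(B\setminus\{0_B\}))\cup\{0_\sharp\}$. Tensor: $\mathsf{A}_1\otimes_C\mathsf{A}_2:=(A_1\wedge A_2,t,\mathbf{Chu}_{2_0}(\mathsf{A}_1,\mathsf{A}_2^\perp))$, the hom-set pointed by the constant arrow (both maps constant at base points), $t((a_1,a_2),(f,g)):=r_1(a_1,g(a_2))=r_2(a_2,f(a_1))$; on arrows $(f_i,g_i):\mathsf{A}_i\to\mathsf{B}_i$, $f_1\otimes_C f_2$ sends $(a_1,a_2)\mapsto(f_1(a_1),f_2(a_2))$ if both nonzero (else $0_\sharp$) and its second component sends $(f,g)\in\mathbf{Chu}_{2_0}(\mathsf{B}_1,\mathsf{B}_2^\perp)$ to $(g_2\circ f\circ f_1,g_1\circ g\circ f_2)$. $\mathcal{F}(\mathcal{L})=(\Sigma\cup\{0\},r,\Sigma'\cup\{1\})$ pointed by $0$ and $1$, $r(p,x)=0\iff p\le x$; $\mathcal{F}(f)=(f,f^\circ)$. *)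

(* Defs.v *)
From Stdlib Require Import ClassicalEpsilon FunctionalExtensionality
  PropExtensionality ProofIrrelevance.

Set Implicit Arguments.
Unset Strict Implicit.

(** * Complete lattices (order + arbitrary joins) *)

Record CLat := {
  lcar :> Type;
  lle : lcar -> lcar -> Prop;
  lle_refl : forall x, lle x x;
  lle_trans : forall x y z, lle x y -> lle y z -> lle x z;
  lle_anti : forall x y, lle x y -> lle y x -> x = y;
  lsup : (lcar -> Prop) -> lcar;
  lsup_ub : forall (S : lcar -> Prop) x, S x -> lle x (lsup S);
  lsup_least : forall (S : lcar -> Prop) y,
      (forall x, S x -> lle x y) -> lle (lsup S) y
}.
Arguments lle {c} x y.
Arguments lsup {c} S.

Definition lbot (L : CLat) : L := lsup (fun _ : L => False).
Definition ltop (L : CLat) : L := lsup (fun _ : L => True).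
Definition linf (L : CLat) (S : L -> Prop) : L :=
  lsup (fun y => forall x, S x -> lle y x).

Definition atom (L : CLat) (p : L) :=
  p <> lbot L /\ forall x, lle x p -> x = lbot L \/ x = p.
Definition coatom (L : CLat) (x : L) :=
  x <> ltop L /\ forall y, lle x y -> y = x \/ y = ltop L.

Definition SigAt (L : CLat) (a p : L) := atom p /\ lle p a.
Definition SigCo (L : CLat) (a x : L) := coatom x /\ lle a x.

Definition atomistic (L : CLat) := forall a : L, a = lsup (SigAt a).
Definition coatomistic (L : CLat) := forall a : L, a = linf (SigCo a).

(** objects of Cal^0_Sym (set equalities are extensional) *)
Definition cal_obj (L : CLat) :=
  atomistic L /\ coatomistic L /\
  (forall x y : L, coatom x -> coatom y ->
      ~ (forall p : L, atom p <-> SigAt x p \/ SigAt y p)) /\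
  (forall p q : L, atom p -> atom q ->
      ~ (forall x : L, coatom x <-> SigCo p x \/ SigCo q x)).

Record CalObj := { cobj :> CLat; cobj_ax : cal_obj cobj }.

Definition radj (L M : CLat) (f : L -> M) (b : M) : L :=
  lsup (fun a => lle (f a) b).

Record CalArr (L M : CLat) := {
  amap :> L -> M;
  ajoin : forall S : L -> Prop,
      amap (lsup S) = lsup (fun y => exists x, S x /\ y = amap x);
  aatom : forall p : L, atom p -> atom (amap p) \/ amap p = lbot M;
  acoatom : forall x : M, coatom x -> coatom (radj amap x) \/ radj amap x = ltop L
}.

Lemma bot_le (L : CLat) (x : L) : lle (lbot L) x.
Proof. apply lsup_least; intros ? []. Qed.

Lemma le_top (L : CLat) (x : L) : lle x (ltop L).
Proof. apply lsup_ub; exact I. Qed.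

Lemma arr_bot (L M : CLat) (f : CalArr L M) : f (lbot L) = lbot M.
Proof.
  apply lle_anti; [|apply bot_le].
  unfold lbot at 1; rewrite ajoin; apply lsup_least.
  intros y [x [[] _]].
Qed.

Lemma arr_mono (L M : CLat) (f : CalArr L M) (x y : L) :
  lle x y -> lle (f x) (f y).
Proof.
  intro Hxy.
  assert (E : y = lsup (fun z => z = x \/ z = y)).
  { apply lle_anti.
    - apply lsup_ub; now right.
    - apply lsup_least; intros z [->| ->]; auto using lle_refl. }
  rewrite E, ajoin. apply lsup_ub. exists x; split; auto.
Qed.

Lemma arr_galois (L M : CLat) (f : CalArr L M) (a : L) (b : M) :
  lle (f a) b <-> lle a (radj f b).
Proof.
  split; intro H.
  - apply lsup_ub; exact H.
  - eapply lle_trans; [apply arr_mono; exact H|].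
    unfold radj; rewrite ajoin; apply lsup_least.
    intros y [x [Hx ->]]; exact Hx.
Qed.

Lemma radj_top (L M : CLat) (f : CalArr L M) : radj f (ltop M) = ltop L.
Proof.
  apply lle_anti; [apply le_top|].
  apply lsup_ub, le_top.
Qed.

(** * The category Chu_{2_0} *)

Record ChuObj := {
  cA : Type; cA0 : cA;
  cX : Type; cX0 : cX;
  cr : cA -> cX -> bool;
  cr0A : forall x, cr cA0 x = false;
  cr0X : forall a, cr a cX0 = false
}.
Arguments cr : clear implicits.
Arguments cA0 : clear implicits.
Arguments cX0 : clear implicits.
Arguments cr0A : clear implicits.
Arguments cr0X : clear implicits.

Record ChuArr (U V : ChuObj) := {
  cf : cA U -> cA V;
  cg : cX V -> cX U;
  cf0 : cf (cA0 U) = cA0 V;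
  cg0 : cg (cX0 V) = cX0 U;
  cadj : forall a y, cr V (cf a) y = cr U a (cg y)
}.

Definition chu_id (U : ChuObj) : ChuArr U U.
Proof.
  refine {| cf := fun a => a; cg := fun y => y |}; reflexivity.
Defined.

Definition chu_comp (U V W : ChuObj) (v : ChuArr V W) (u : ChuArr U V) : ChuArr U W.
Proof.
  refine {| cf := fun a => cf v (cf u a); cg := fun y => cg u (cg v y) |}.
  - now rewrite (cf0 u), (cf0 v).
  - now rewrite (cg0 v), (cg0 u).
  - intros a y; now rewrite (cadj v), (cadj u).
Defined.

Definition arr_eq (U V : ChuObj) (u v : ChuArr U V) :=
  (forall a, cf u a = cf v a) /\ (forall y, cg u y = cg v y).

Definition chu_is_iso (U V : ChuObj) (u : ChuArr U V) :=
  exists v : ChuArr V U, arr_eq (chu_comp v u) (chu_id U) /\ arr_eq (chu_comp u v) (chu_id V).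

Definition chu_iso (U V : ChuObj) := exists u : ChuArr U V, chu_is_iso u.

Lemma chuarr_ext (U V : ChuObj) (u v : ChuArr U V) :
  (forall a, cf u a = cf v a) -> (forall y, cg u y = cg v y) -> u = v.
Proof.
  destruct u as [f g f0 g0 ad], v as [f' g' f0' g0' ad']; simpl; intros Hf Hg.
  apply functional_extensionality in Hf, Hg; subst.
  f_equal; apply proof_irrelevance.
Qed.

Definition chu_dual (U : ChuObj) : ChuObj :=
  {| cA := cX U; cA0 := cX0 U; cX := cA U; cX0 := cA0 U;
     cr := fun x a => cr U a x;
     cr0A := fun a => cr0X U a; cr0X := fun x => cr0A U x |}.

(** constant arrow (base point of the hom-set) *)
Definition chu_const (U V : ChuObj) : ChuArr U V.
Proof.
  refine {| cf := fun _ => cA0 V; cg := fun _ => cX0 U |}; try reflexivity.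
  intros a y; now rewrite (cr0A V), (cr0X U).
Defined.

Definition smash (A : Type) (a0 : A) (B : Type) (b0 : B) : Type :=
  option ({a : A | a <> a0} * {b : B | b <> b0}).

Definition tens_r (U V : ChuObj) (a : smash (cA0 U) (cA0 V))
  (h : ChuArr U (chu_dual V)) : bool :=
  match a with
  | None => false
  | Some (a1, a2) => cr U (proj1_sig a1) (cg h (proj1_sig a2))
  end.

Definition tensor (U V : ChuObj) : ChuObj.
Proof.
  refine {| cA := smash (cA0 U) (cA0 V); cA0 := None;
            cX := ChuArr U (chu_dual V); cX0 := chu_const U (chu_dual V);
            cr := @tens_r U V |}.
  - reflexivity.
  - intros [[a1 a2]|]; simpl; [apply cr0X|reflexivity].
Defined.

Definition tens_cg (U1 U2 V1 V2 : ChuObj) (p1 : ChuArr U1 V1) (p2 : ChuArr U2 V2)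
  (h : ChuArr V1 (chu_dual V2)) : ChuArr U1 (chu_dual U2).
Proof.
  refine {| cf := fun a : cA U1 => cg p2 (cf h (cf p1 a)) : cA (chu_dual U2);
            cg := fun y : cX (chu_dual U2) => cg p1 (cg h (cf p2 y)) : cX U1 |}.
  - simpl. rewrite (cf0 p1).
    exact (eq_trans (f_equal (cg p2) (cf0 h)) (cg0 p2)).
  - simpl. rewrite (cf0 p2).
    exact (eq_trans (f_equal (cg p1) (cg0 h)) (cg0 p1)).
  - intros a y; simpl.
    rewrite <- (cadj p2). rewrite <- (cadj p1).
    exact (cadj h (cf p1 a) (cf p2 y)).
Defined.

Definition tens_cf (U1 U2 V1 V2 : ChuObj) (p1 : ChuArr U1 V1) (p2 : ChuArr U2 V2)
  (a : smash (cA0 U1) (cA0 U2)) : smash (cA0 V1) (cA0 V2) :=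
  match a with
  | None => None
  | Some (a1, a2) =>
      match excluded_middle_informative (cf p1 (proj1_sig a1) = cA0 V1) with
      | left _ => None
      | right n1 =>
          match excluded_middle_informative (cf p2 (proj1_sig a2) = cA0 V2) with
          | left _ => None
          | right n2 => Some (exist (fun b => b <> cA0 V1) _ n1, exist (fun b => b <> cA0 V2) _ n2)
          end
      end
  end.

Definition tensor_arr (U1 U2 V1 V2 : ChuObj) (p1 : ChuArr U1 V1) (p2 : ChuArr U2 V2)
  : ChuArr (tensor U1 U2) (tensor V1 V2).
Proof.
  refine {| cf := tens_cf p1 p2 : cA (tensor U1 U2) -> cA (tensor V1 V2);
            cg := tens_cg p1 p2 |}.
  - reflexivity.
  - apply chuarr_ext; simpl.
    + intro a; apply (cg0 p2).
    + intro y; apply (cg0 p1).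
  - intros [[[a1 n1] [a2 n2]]|] h; simpl; [|reflexivity].
    destruct (excluded_middle_informative (cf p1 a1 = cA0 V1)) as [e1|n1'].
    + simpl. rewrite <- (cadj p1), e1. symmetry; apply cr0A.
    + destruct (excluded_middle_informative (cf p2 a2 = cA0 V2)) as [e2|n2'];
        simpl.
      * rewrite <- (cadj p1), e2.
        change (false = cr V1 (cf p1 a1) (cg h (cX0 (chu_dual V2)))).
        rewrite (cg0 h). symmetry; apply cr0X.
      * rewrite <- (cadj p1). reflexivity.
Defined.

(** * The functor F : Cal^0_Sym -> Chu_{2_0} *)

Definition bdec (P : Prop) : bool :=
  if excluded_middle_informative P then true else false.

Lemma bdecP (P : Prop) : bdec P = true <-> P.
Proof.
  unfold bdec; destruct (excluded_middle_informative P); split; congruence || tauto.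
Qed.

Lemma sig_ext (A : Type) (P : A -> Prop) (x y : sig P) :
  proj1_sig x = proj1_sig y -> x = y.
Proof.
  destruct x as [x px], y as [y py]; simpl; intros ->.
  f_equal; apply proof_irrelevance.
Qed.

Definition FObj (L : CLat) : ChuObj.
Proof.
  refine {| cA := {a : L | atom a \/ a = lbot L};
            cA0 := exist _ (lbot L) (or_intror eq_refl);
            cX := {x : L | coatom x \/ x = ltop L};
            cX0 := exist _ (ltop L) (or_intror eq_refl);
            cr := fun a x => negb (bdec (lle (proj1_sig a) (proj1_sig x))) |}.
  - intros x; simpl. assert (H := bdecP (lle (lbot L) (proj1_sig x))).
    rewrite (proj2 H (bot_le _)); reflexivity.
  - intros a; simpl. assert (H := bdecP (lle (proj1_sig a) (ltop L))).
    rewrite (proj2 H (le_top _)); reflexivity.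
Defined.

Lemma FArr_atom (L M : CLat) (f : CalArr L M) (a : {a : L | atom a \/ a = lbot L}) :
  atom (f (proj1_sig a)) \/ f (proj1_sig a) = lbot M.
Proof.
  destruct a as [a [Ha| ->]]; simpl; [apply aatom; exact Ha|right; apply arr_bot].
Qed.

Lemma FArr_coatom (L M : CLat) (f : CalArr L M) (x : {x : M | coatom x \/ x = ltop M}) :
  coatom (radj f (proj1_sig x)) \/ radj f (proj1_sig x) = ltop L.
Proof.
  destruct x as [x [Hx| ->]]; simpl; [apply acoatom; exact Hx|right; apply radj_top].
Qed.

Definition FArr (L M : CLat) (f : CalArr L M) : ChuArr (FObj L) (FObj M).
Proof.
  refine {| cf := fun a : cA (FObj L) => exist _ (f (proj1_sig a)) (FArr_atom f a)
                 : cA (FObj M);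
            cg := fun x : cX (FObj M) =>
                    exist _ (radj f (proj1_sig x)) (FArr_coatom f x) : cX (FObj L) |}.
  - apply sig_ext; simpl; apply arr_bot.
  - apply sig_ext; simpl; apply radj_top.
  - intros a y; simpl. f_equal.
    destruct (excluded_middle_informative (lle (f (proj1_sig a)) (proj1_sig y))) as [H|H].
    + rewrite (proj2 (bdecP _) H).
      symmetry; apply bdecP, arr_galois, H.
    + unfold bdec.
      destruct (excluded_middle_informative (lle (f (proj1_sig a)) (proj1_sig y)));
        [contradiction|].
      destruct (excluded_middle_informative (lle (proj1_sig a) (radj f (proj1_sig y))))
        as [H'|]; [|reflexivity].
      exfalso; apply H, arr_galois, H'.
Defined.

(** * The tensor product L1 (circledast) L2 *)

Definition At (L : CLat) := {p : L | atom p}.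

Definition ClSet (L : CLat) (S : At L -> Prop) :=
  exists a : L, (coatom a \/ a = ltop L) /\
    forall p : At L, S p <-> lle (proj1_sig p) a.

Section Star.
Variables L1 L2 : CLat.

Definition starCo (R : At L1 * At L2 -> Prop) :=
  (exists q, ~ R q) /\
  forall (p1 : At L1) (p2 : At L2),
    ClSet (fun q1 => R (q1, p2)) /\ ClSet (fun q2 => R (p1, q2)).

Definition starGen (R : At L1 * At L2 -> Prop) := starCo R \/ forall q, R q.

Definition starClosed (R : At L1 * At L2 -> Prop) :=
  exists om : (At L1 * At L2 -> Prop) -> Prop,
    (forall S, om S -> starGen S) /\ forall q, R q <-> forall S, om S -> S q.

Definition starCar := {R : At L1 * At L2 -> Prop | starClosed R}.

Definition starLe (x y : starCar) := forall q, proj1_sig x q -> proj1_sig y q.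

Definition starSupSet (F : starCar -> Prop) (q : At L1 * At L2) :=
  forall T, starGen T -> (forall R, F R -> forall q', proj1_sig R q' -> T q') -> T q.

Lemma starSup_closed (F : starCar -> Prop) : starClosed (starSupSet F).
Proof.
  exists (fun T => starGen T /\ (forall R, F R -> forall q', proj1_sig R q' -> T q')).
  split; [intros S [H _]; exact H|].
  intro q; unfold starSupSet; split.
  - intros H S [H1 H2]; exact (H S H1 H2).
  - intros H T H1 H2; exact (H T (conj H1 H2)).
Qed.

Definition starSup (F : starCar -> Prop) : starCar := exist _ _ (starSup_closed F).

Lemma starLe_refl x : starLe x x.
Proof. intros q H; exact H. Qed.

Lemma starLe_trans x y z : starLe x y -> starLe y z -> starLe x z.
Proof. intros H1 H2 q H; auto. Qed.

Lemma starLe_anti x y : starLe x y -> starLe y x -> x = y.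
Proof.
  intros H1 H2; apply sig_ext.
  apply functional_extensionality; intro q.
  apply propositional_extensionality; split; auto.
Qed.

Lemma starSup_ub (F : starCar -> Prop) x : F x -> starLe x (starSup F).
Proof. intros Hx q Hq T _ HT; exact (HT x Hx q Hq). Qed.

Lemma starSup_least (F : starCar -> Prop) y :
  (forall x, F x -> starLe x y) -> starLe (starSup F) y.
Proof.
  intros H q Hq. destruct y as [y [om [Hom Hy]]]; simpl in *.
  apply Hy; intros S HS. apply Hq; [exact (Hom S HS)|].
  intros R HR q' Hq'. specialize (H R HR q' Hq'); simpl in H.
  exact (proj1 (Hy q') H S HS).
Qed.

Definition star : CLat :=
  {| lcar := starCar; lle := starLe;
     lle_refl := starLe_refl; lle_trans := starLe_trans; lle_anti := starLe_anti;
     lsup := starSup; lsup_ub := starSup_ub; lsup_least := starSup_least |}.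

End Star.

(** h is f1 (circledast) f2 : the (join-preserving) arrow sending the atom
    {(p1,p2)} to {(f1 p1, f2 p2)} if both are nonzero, and to 0 otherwise. *)
Definition is_star_arr (L1 L2 M1 M2 : CLat) (f1 : CalArr L1 M1) (f2 : CalArr L2 M2)
  (h : CalArr (star L1 L2) (star M1 M2)) :=
  forall (p1 : At L1) (p2 : At L2) (R : star L1 L2),
    (forall q, proj1_sig R q <-> q = (p1, p2)) ->
    (forall (q1 : At M1) (q2 : At M2),
        proj1_sig q1 = f1 (proj1_sig p1) -> proj1_sig q2 = f2 (proj1_sig p2) ->
        forall q, proj1_sig (h R) q <-> q = (q1, q2)) /\
    (f1 (proj1_sig p1) = lbot M1 \/ f2 (proj1_sig p2) = lbot M2 ->
        h R = lbot (star M1 M2)).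

(* Main.v *)
Require Import Defs.
From Stdlib Require Import Classical ClassicalEpsilon FunctionalExtensionality
  PropExtensionality ProofIrrelevance.
Set Implicit Arguments.
Unset Strict Implicit.


Lemma atom_not_bot (L : CLat) (p : L) : atom p -> p <> lbot L.
Proof. intros [H _]; exact H. Qed.

Lemma not_atom_bot (L : CLat) : ~ atom (lbot L).
Proof. intros [H _]; apply H; reflexivity. Qed.

Lemma atom_le_atom (L : CLat) (p q : L) : atom p -> atom q -> lle q p -> q = p.
Proof.
  intros [_ Hp] Hq Hqp. destruct (Hp q Hqp) as [E|E]; [|exact E].
  exfalso; exact (atom_not_bot Hq E).
Qed.

Lemma le_by_atoms (L : CLat) (Hat : atomistic L) (a b : L) :
  (forall p, atom p -> lle p a -> lle p b) -> lle a b.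
Proof.
  intro H. apply lle_trans with (lsup (SigAt a)).
  - rewrite <- (Hat a); apply lle_refl.
  - apply lsup_least. intros p [Hp Hpa]; exact (H p Hp Hpa).
Qed.

Lemma lsup_atoms_eq (L : CLat) (Hat : atomistic L) (S : L -> Prop) (a : L) :
  (forall p, atom p -> (S p <-> lle p a)) -> lsup (fun q => atom q /\ S q) = a.
Proof.
  intro H. apply lle_anti.
  - apply lsup_least. intros q [Hq Sq]. apply (H q Hq); exact Sq.
  - apply le_by_atoms; [exact Hat|]. intros p Hp Hpa. apply lsup_ub.
    split; [exact Hp|]. apply (H p Hp); exact Hpa.
Qed.

Lemma sep_coatom (L : CLat) (Hco : coatomistic L) (p q : L) :
  atom p -> atom q -> p <> q -> exists x, coatom x /\ lle p x /\ ~ lle q x.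
Proof.
  intros Hp Hq Hne. apply NNPP; intro Hn.
  assert (Hqp : lle q p).
  { rewrite (Hco p). apply lsup_ub. intros x [Hx Hpx].
    apply NNPP; intro Hqx. apply Hn. exists x; auto. }
  apply Hne. symmetry. exact (atom_le_atom Hp Hq Hqp).
Qed.

Lemma coatom_not_above (L : CLat) (Hco : coatomistic L) (p : L) :
  atom p -> exists x, coatom x /\ ~ lle p x.
Proof.
  intros Hp. apply NNPP; intro Hn.
  assert (Hb : lle p (lbot L)).
  { rewrite (Hco (lbot L)). apply lsup_ub. intros x [Hx _].
    apply NNPP; intro Hpx. apply Hn. exists x; auto. }
  apply (atom_not_bot Hp). apply lle_anti; [exact Hb|apply bot_le].
Qed.

Lemma coatom_atom_outside (L : CLat) (Hat : atomistic L) (x : L) :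
  coatom x -> exists p, atom p /\ ~ lle p x.
Proof.
  intros Hx. apply NNPP; intro Hn.
  assert (Ht : lle (ltop L) x).
  { apply le_by_atoms; [exact Hat|]. intros p Hp _.
    apply NNPP; intro Hpx. apply Hn. exists p; auto. }
  apply (proj1 Hx). apply lle_anti; [apply le_top|exact Ht].
Qed.

Lemma coatom_le_eq (L : CLat) (x y : L) :
  coatom x -> lle x y -> y <> ltop L -> y = x.
Proof. intros [_ Hx] Hxy Hy. destruct (Hx y Hxy); [assumption|contradiction]. Qed.

Lemma top_not_coatom (L : CLat) : ~ coatom (ltop L).
Proof. intros [H _]; apply H; reflexivity. Qed.

Definition c_at (L : CalObj) : atomistic L := proj1 (cobj_ax L).
Definition c_co (L : CalObj) : coatomistic L := proj1 (proj2 (cobj_ax L)).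
Definition c_c3 (L : CalObj) := proj1 (proj2 (proj2 (cobj_ax L))).
Definition c_c4 (L : CalObj) := proj2 (proj2 (proj2 (cobj_ax L))).
Arguments c_at : clear implicits.
Arguments c_co : clear implicits.
Arguments c_c3 : clear implicits.
Arguments c_c4 : clear implicits.

Lemma at_ext (L : CLat) (p q : At L) : proj1_sig p = proj1_sig q -> p = q.
Proof. apply sig_ext. Qed.

Definition Gen (L1 L2 : CLat) (x1 : L1) (y2 : L2) (q : At L1 * At L2) : Prop :=
  lle (proj1_sig (fst q)) x1 \/ lle (proj1_sig (snd q)) y2.

Lemma Gen_starCo (L1 L2 : CLat) (Hat1 : atomistic L1) (Hat2 : atomistic L2)
  (x1 : L1) (y2 : L2) : coatom x1 -> coatom y2 -> starCo (Gen x1 y2).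
Proof.
  intros Hx Hy. split.
  - destruct (coatom_atom_outside Hat1 Hx) as [p1 [Hp1 Hn1]].
    destruct (coatom_atom_outside Hat2 Hy) as [p2 [Hp2 Hn2]].
    exists (exist _ p1 Hp1, exist _ p2 Hp2). intros [H|H]; simpl in H; auto.
  - intros p1 p2. split.
    + destruct (classic (lle (proj1_sig p2) y2)) as [H|H].
      * exists (ltop L1); split; [right; reflexivity|].
        intro q; split; intro; [apply le_top|right; exact H].
      * exists x1; split; [left; exact Hx|].
        intro q; unfold Gen; simpl; split; [intros [A|A]; tauto|left; auto].
    + destruct (classic (lle (proj1_sig p1) x1)) as [H|H].
      * exists (ltop L2); split; [right; reflexivity|].
        intro q; split; intro; [apply le_top|left; exact H].
      * exists y2; split; [left; exact Hy|].
        intro q; unfold Gen; simpl; split; [intros [A|A]; tauto|right; auto].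
Qed.

Lemma gen_closed (L1 L2 : CLat) (S : At L1 * At L2 -> Prop) :
  starGen S -> starClosed S.
Proof.
  intro H. exists (fun T => T = S). split.
  - intros T ->; exact H.
  - intro q; split; [intros Hq T ->; exact Hq|intro Hq; apply Hq; reflexivity].
Qed.

Lemma star_ext (L1 L2 : CLat) (C D : star L1 L2) :
  (forall q, proj1_sig C q <-> proj1_sig D q) -> C = D.
Proof.
  intro H. apply (starLe_anti (L1:=L1) (L2:=L2)); intros q Hq; apply H; exact Hq.
Qed.

Lemma star_top_set (L1 L2 : CLat) q : proj1_sig (ltop (star L1 L2)) q.
Proof.
  simpl. unfold starSupSet. intros T _ HT.
  assert (Hc : starClosed (fun _ : At L1 * At L2 => True)).
  { exists (fun _ => False). split; [intros _ []|]. intro; split; [intros _ _ []|auto]. }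
  exact (HT (exist _ _ Hc) I q I).
Qed.

Lemma star_bot_set (L1 L2 : CalObj) q : ~ proj1_sig (lbot (star L1 L2)) q.
Proof.
  simpl. unfold starSupSet. intro H.
  destruct q as [[p1 Hp1] [p2 Hp2]].
  destruct (coatom_not_above (c_co L1) Hp1) as [x1 [Hx1 Hn1]].
  destruct (coatom_not_above (c_co L2) Hp2) as [y2 [Hy2 Hn2]].
  assert (Hg := Gen_starCo (c_at L1) (c_at L2) Hx1 Hy2).
  specialize (H _ (or_introl Hg)). destruct H as [A|A]; [intros ? []| |]; simpl in A; auto.
Qed.

Lemma star_eq_top (L1 L2 : CLat) (C : star L1 L2) :
  (forall q, proj1_sig C q) -> C = ltop (star L1 L2).
Proof. intro H; apply star_ext; intro q; split; intro; [apply star_top_set|apply H]. Qed.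

Lemma star_eq_bot (L1 L2 : CalObj) (C : star L1 L2) :
  (forall q, ~ proj1_sig C q) -> C = lbot (star L1 L2).
Proof.
  intro H; apply star_ext; intro q; split; intro A; [elim (H q A)|elim (star_bot_set A)].
Qed.

Definition sing (L1 L2 : CLat) (p1 : At L1) (p2 : At L2) (q : At L1 * At L2) : Prop :=
  q = (p1, p2).

Lemma pair_neq (A B : Type) (q p : A * B) : q <> p -> fst q <> fst p \/ snd q <> snd p.
Proof.
  intro H. destruct q, p; simpl.
  destruct (classic (a = a0)); [subst; right; congruence|left; auto].
Qed.

Lemma sing_closed (L1 L2 : CalObj) (p1 : At L1) (p2 : At L2) : starClosed (sing p1 p2).
Proof.
  exists (fun T => starGen T /\ T (p1, p2)). split; [intros S [H _]; exact H|].
  intro q; split.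
  - intros -> S [_ H]; exact H.
  - intro H. apply NNPP; intro Hne. unfold sing in Hne.
    destruct q as [[q1 Hq1] [q2 Hq2]]. destruct p1 as [p1 Hp1], p2 as [p2 Hp2].
    destruct (pair_neq Hne) as [N|N]; simpl in N.
    + assert (N' : p1 <> q1) by (intro E; apply N; apply sig_ext; simpl; auto).
      destruct (sep_coatom (c_co L1) Hp1 Hq1 N') as [x1 [Hx1 [A1 B1]]].
      destruct (coatom_not_above (c_co L2) Hq2) as [y2 [Hy2 B2]].
      assert (Hg := Gen_starCo (c_at L1) (c_at L2) Hx1 Hy2).
      destruct (H _ (conj (or_introl Hg) (or_introl A1))) as [A|A]; simpl in A; auto.
    + assert (N' : p2 <> q2) by (intro E; apply N; apply sig_ext; simpl; auto).
      destruct (sep_coatom (c_co L2) Hp2 Hq2 N') as [y2 [Hy2 [A2 B2]]].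
      destruct (coatom_not_above (c_co L1) Hq1) as [x1 [Hx1 B1]].
      assert (Hg := Gen_starCo (c_at L1) (c_at L2) Hx1 Hy2).
      destruct (H _ (conj (or_introl Hg) (or_intror A2))) as [A|A]; simpl in A; auto.
Qed.

Definition singE (L1 L2 : CalObj) (p1 : At L1) (p2 : At L2) : star L1 L2 :=
  exist _ (sing p1 p2) (sing_closed p1 p2).

Lemma singE_atom (L1 L2 : CalObj) (p1 : At L1) (p2 : At L2) : atom (singE p1 p2).
Proof.
  split.
  - intro E. apply (star_bot_set (q := (p1,p2))). rewrite <- E. simpl. reflexivity.
  - intros x Hx. destruct (classic (exists q, proj1_sig x q)) as [[q Hq]|N].
    + right. apply star_ext; intro q'; split; [apply Hx|].
      simpl; unfold sing; intros ->. assert (E := Hx q Hq). simpl in E; unfold sing in E.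
      subst; exact Hq.
    + left. apply star_eq_bot. intros q Hq; apply N; eauto.
Qed.

Lemma star_atom_sing (L1 L2 : CalObj) (C : star L1 L2) :
  atom C -> exists p1 p2, C = singE p1 p2.
Proof.
  intro HC. destruct (classic (exists q, proj1_sig C q)) as [[[p1 p2] Hq]|N].
  - exists p1, p2. symmetry. apply (atom_le_atom HC (singE_atom p1 p2)).
    intros q Hq'; simpl in Hq'; unfold sing in Hq'; subst; exact Hq.
  - exfalso. apply (atom_not_bot HC). apply star_eq_bot. intros q Hq; apply N; eauto.
Qed.

Lemma singE_inj (L1 L2 : CalObj) (p1 q1 : At L1) (p2 q2 : At L2) :
  singE p1 p2 = singE q1 q2 -> p1 = q1 /\ p2 = q2.
Proof.
  intro E. assert (H : proj1_sig (singE p1 p2) (p1, p2)) by reflexivity.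
  rewrite E in H. simpl in H; unfold sing in H. injection H; auto.
Qed.

Lemma rigidity (L1 L2 : CalObj) (R T : At L1 * At L2 -> Prop) :
  starCo R -> starCo T -> (forall q, R q -> T q) -> forall q, T q -> R q.
Proof.
  intros HR HT Sub q Tq. apply NNPP; intro Rq.
  destruct q as [q1 q2].
  destruct (proj2 (proj2 HR q1 q2)) as [x [Hx Ex]].
  destruct (proj2 (proj2 HT q1 q2)) as [x' [Hx' Ex']].
  assert (Nx : ~ lle (proj1_sig q2) x) by (intro A; apply Rq; apply Ex; exact A).
  assert (Cx : coatom x).
  { destruct Hx as [Hx|Hx]; [exact Hx|]. subst; elim Nx; apply le_top. }
  assert (Lx : lle x x').
  { apply le_by_atoms; [exact (c_at L2)|]. intros p Hp Hpx.
    apply (Ex' (exist _ p Hp)). apply Sub. apply (Ex (exist _ p Hp)). exact Hpx. }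
  assert (Tx' : x' = ltop L2).
  { apply NNPP; intro N. assert (E := coatom_le_eq Cx Lx N). subst x'.
    apply Nx. apply Ex'. exact Tq. }
  assert (Hcol : forall p : At L2, ~ lle (proj1_sig p) x -> forall s, T (s, p)).
  { intros p Np s.
    destruct (proj1 (proj2 HR q1 p)) as [z [Hz Ez]].
    destruct (proj1 (proj2 HT q1 p)) as [z' [Hz' Ez']].
    assert (NR : ~ R (q1, p)) by (intro A; apply Np; apply Ex; exact A).
    assert (Nz : ~ lle (proj1_sig q1) z) by (intro A; apply NR; apply Ez; exact A).
    assert (Cz : coatom z).
    { destruct Hz as [Hz|Hz]; [exact Hz|]. subst; elim Nz; apply le_top. }
    assert (Lz : lle z z').
    { apply le_by_atoms; [exact (c_at L1)|]. intros r Hr Hrz.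
      apply (Ez' (exist _ r Hr)). apply Sub. apply (Ez (exist _ r Hr)). exact Hrz. }
    assert (Tq1p : T (q1, p)) by (apply Ex'; rewrite Tx'; apply le_top).
    assert (Tz' : z' = ltop L1).
    { apply NNPP; intro N. assert (E := coatom_le_eq Cz Lz N). subst z'.
      apply Nz. apply Ez'. exact Tq1p. }
    apply Ez'. rewrite Tz'; apply le_top. }
  destruct (proj1 HT) as [[a1 a2] Na].
  destruct (proj2 (proj2 HT a1 a2)) as [w [Hw Ew]].
  assert (Nw : ~ lle (proj1_sig a2) w) by (intro A; apply Na; apply Ew; exact A).
  assert (Cw : coatom w).
  { destruct Hw as [Hw|Hw]; [exact Hw|]. subst; elim Nw; apply le_top. }
  apply (c_c3 L2 x w Cx Cw). intro p; split.
  - intro Hp. destruct (classic (lle p x)) as [A|A]; [left; split; auto|right; split; auto].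
    apply (Ew (exist _ p Hp)). apply (Hcol (exist _ p Hp) A).
  - intros [[A _]|[A _]]; exact A.
Qed.

Lemma star_not_in (L1 L2 : CLat) (C : star L1 L2) q :
  ~ proj1_sig C q -> exists S, starCo S /\ (forall q', proj1_sig C q' -> S q') /\ ~ S q.
Proof.
  destruct C as [R [om [Hom HR]]]; simpl. intro Nq.
  assert (N : ~ forall S, om S -> S q) by (intro A; apply Nq; apply HR; exact A).
  apply not_all_ex_not in N. destruct N as [S N].
  apply imply_to_and in N. destruct N as [HS NS].
  exists S. destruct (Hom S HS) as [H|H]; [|elim NS; apply H].
  split; [exact H|]. split; [|exact NS]. intros q' Hq'. apply HR; auto.
Qed.

Lemma starCo_coatom (L1 L2 : CalObj) (C : star L1 L2) (S : At L1 * At L2 -> Prop) :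
  (forall q, proj1_sig C q <-> S q) -> starCo S -> coatom C.
Proof.
  intros EC HS. split.
  - intro E. destruct (proj1 HS) as [q Nq]. apply Nq, EC. rewrite E. apply star_top_set.
  - intros y Hy. destruct (classic (y = ltop (star L1 L2))) as [E|E]; [right; exact E|left].
    assert (Nf : exists q, ~ proj1_sig y q).
    { apply NNPP; intro N. apply E. apply star_eq_top. intro q. apply NNPP; intro A.
      apply N; eauto. }
    destruct Nf as [q Nq]. destruct (star_not_in Nq) as [T [HT [Sub _]]].
    assert (SubST : forall q, S q -> T q).
    { intros q' A. apply Sub. apply Hy. apply EC. exact A. }
    assert (R := rigidity HS HT SubST).
    apply star_ext; intro q'; split; [|apply Hy].
    intro A. apply EC. apply R. apply Sub. exact A.
Qed.

Lemma coatom_starCo (L1 L2 : CalObj) (C : star L1 L2) :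
  coatom C -> starCo (proj1_sig C).
Proof.
  intro HC.
  assert (Nf : exists q, ~ proj1_sig C q).
  { apply NNPP; intro N. apply (proj1 HC). apply star_eq_top. intro q. apply NNPP; intro A.
    apply N; eauto. }
  destruct Nf as [q Nq]. destruct (star_not_in Nq) as [S [HS [Sub NS]]].
  set (E := exist _ S (gen_closed (or_introl HS)) : star L1 L2).
  assert (Le : lle C E) by exact Sub.
  destruct (proj2 HC E Le) as [A|A].
  - rewrite <- A. exact HS.
  - elim NS. change (proj1_sig E q). rewrite A. apply star_top_set.
Qed.

Lemma two_coatoms_miss (L : CalObj) (a b : L) :
  coatom a -> coatom b -> exists p, atom p /\ ~ lle p a /\ ~ lle p b.
Proof.
  intros Ha Hb. apply NNPP; intro N. apply (c_c3 L a b Ha Hb). intro p; split.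
  - intro Hp. destruct (classic (lle p a)) as [A|A]; [left; split; auto|].
    destruct (classic (lle p b)) as [B|B]; [right; split; auto|].
    elim N; eauto.
  - intros [[A _]|[A _]]; exact A.
Qed.

Lemma two_atoms_miss (L : CalObj) (p q : L) :
  atom p -> atom q -> exists x, coatom x /\ ~ lle p x /\ ~ lle q x.
Proof.
  intros Hp Hq. apply NNPP; intro N. apply (c_c4 L p q Hp Hq). intro x; split.
  - intro Hx. destruct (classic (lle p x)) as [A|A]; [left; split; auto|].
    destruct (classic (lle q x)) as [B|B]; [right; split; auto|].
    elim N; eauto.
  - intros [[A _]|[A _]]; exact A.
Qed.

Lemma star_atomistic (L1 L2 : CalObj) : atomistic (star L1 L2).
Proof.
  intro C. apply lle_anti.
  - intros [p1 p2] Hq.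
    assert (Le : lle (singE p1 p2) (lsup (SigAt C))).
    { apply lsup_ub. split; [apply singE_atom|]. intros q Hq'; simpl in Hq'; unfold sing in Hq'.
      subst; exact Hq. }
    apply Le. reflexivity.
  - apply lsup_least. intros x [_ A]; exact A.
Qed.

Lemma star_coatomistic (L1 L2 : CalObj) : coatomistic (star L1 L2).
Proof.
  intro C. apply lle_anti.
  - unfold linf. apply lsup_ub. intros x [_ A]; exact A.
  - intros q Hq. apply NNPP; intro Nq.
    destruct (star_not_in Nq) as [S [HS [Sub NS]]].
    set (E := exist _ S (gen_closed (or_introl HS)) : star L1 L2).
    assert (CE : coatom E) by (apply (starCo_coatom (S := S)); [intro; simpl; tauto|exact HS]).
    assert (Le : lle (linf (SigCo C)) E).
    { unfold linf. apply lsup_least. intros y Hy. apply Hy. split; [exact CE|exact Sub]. }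
    apply NS. apply Le. exact Hq.
Qed.

Lemma star_c3 (L1 L2 : CalObj) : forall x y : star L1 L2, coatom x -> coatom y ->
      ~ (forall p, atom p <-> SigAt x p \/ SigAt y p).
Proof.
  intros x y Hx Hy H.
  assert (Cov : forall q, proj1_sig x q \/ proj1_sig y q).
  { intros [p1 p2]. destruct (proj1 (H (singE p1 p2)) (singE_atom p1 p2)) as [[_ A]|[_ A]];
      [left|right]; apply A; reflexivity. }
  assert (HR := coatom_starCo Hx). assert (HT := coatom_starCo Hy).
  destruct (proj1 HR) as [[a1 a2] Na]. destruct (proj1 HT) as [[b1 b2] Nb].
  destruct (proj1 (proj2 HR a1 a2)) as [cR [HcR EcR]].
  destruct (proj1 (proj2 HT b1 b2)) as [cT [HcT EcT]].
  assert (CcR : coatom cR).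
  { destruct HcR as [A|A]; [exact A|]. elim Na. apply EcR. rewrite A; apply le_top. }
  assert (CcT : coatom cT).
  { destruct HcT as [A|A]; [exact A|]. elim Nb. apply EcT. rewrite A; apply le_top. }
  destruct (two_coatoms_miss CcR CcT) as [q1 [Hq1 [N1 N2]]].
  set (q1' := exist _ q1 Hq1 : At L1).
  assert (NR : ~ proj1_sig x (q1', a2)) by (intro A; apply N1; apply (EcR q1'); exact A).
  assert (NT : ~ proj1_sig y (q1', b2)) by (intro A; apply N2; apply (EcT q1'); exact A).
  destruct (proj2 (proj2 HR q1' a2)) as [xR [HxR ExR]].
  destruct (proj2 (proj2 HT q1' b2)) as [xT [HxT ExT]].
  assert (CxR : coatom xR).
  { destruct HxR as [A|A]; [exact A|]. elim NR. apply ExR. rewrite A; apply le_top. }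
  assert (CxT : coatom xT).
  { destruct HxT as [A|A]; [exact A|]. elim NT. apply ExT. rewrite A; apply le_top. }
  destruct (two_coatoms_miss CxR CxT) as [q2 [Hq2 [M1 M2]]].
  destruct (Cov (q1', exist _ q2 Hq2)) as [A|A].
  - apply M1. apply (ExR (exist _ q2 Hq2)). exact A.
  - apply M2. apply (ExT (exist _ q2 Hq2)). exact A.
Qed.

Lemma star_c4 (L1 L2 : CalObj) : forall p q : star L1 L2, atom p -> atom q ->
      ~ (forall x, coatom x <-> SigCo p x \/ SigCo q x).
Proof.
  intros p q Hp Hq H.
  destruct (star_atom_sing Hp) as [p1 [p2 ->]].
  destruct (star_atom_sing Hq) as [q1 [q2 ->]].
  destruct (two_atoms_miss (proj2_sig p1) (proj2_sig q1)) as [x1 [Hx1 [A1 B1]]].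
  destruct (two_atoms_miss (proj2_sig p2) (proj2_sig q2)) as [y2 [Hy2 [A2 B2]]].
  assert (HG := Gen_starCo (c_at L1) (c_at L2) Hx1 Hy2).
  set (E := exist _ _ (gen_closed (or_introl HG)) : star L1 L2).
  assert (CE : coatom E) by (apply (starCo_coatom (S := Gen x1 y2)); [intro; simpl; tauto|exact HG]).
  destruct (proj1 (H E) CE) as [[_ A]|[_ A]].
  - destruct (A (p1, p2) eq_refl) as [C|C]; auto.
  - destruct (A (q1, q2) eq_refl) as [C|C]; auto.
Qed.

Lemma star_cal (L1 L2 : CalObj) : cal_obj (star L1 L2).
Proof.
  split; [apply star_atomistic|]. split; [apply star_coatomistic|].
  split; [apply star_c3|apply star_c4].
Qed.

Definition starObj (L1 L2 : CalObj) : CalObj := {| cobj := star L1 L2; cobj_ax := star_cal L1 L2 |}.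

Definition Fc (L1 L2 : CLat) (C : star L1 L2) (a1 : L1) : L2 :=
  lsup (fun q2 => atom q2 /\ forall (H1 : atom a1) (H2 : atom q2),
                    proj1_sig C (exist _ a1 H1, exist _ q2 H2)).
Definition Gc (L1 L2 : CLat) (C : star L1 L2) (a2 : L2) : L1 :=
  lsup (fun q1 => atom q1 /\ forall (H1 : atom q1) (H2 : atom a2),
                    proj1_sig C (exist _ q1 H1, exist _ a2 H2)).

Lemma trivial_lat (L : CLat) (Hat : atomistic L) : (forall p : L, ~ atom p) -> forall x y : L, x = y.
Proof.
  intros N x y. apply lle_anti; apply le_by_atoms; auto; intros p Hp; elim (N p Hp).
Qed.

Lemma coatom_or_top_gen (L1 L2 : CalObj) (C : star L1 L2) :
  coatom C \/ C = ltop (star L1 L2) -> starGen (proj1_sig C).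
Proof.
  intros [H|H]; [left; apply coatom_starCo; exact H|right; rewrite H; apply star_top_set].
Qed.

Lemma starGen_cl (L1 L2 : CLat) (S : At L1 * At L2 -> Prop) : starGen S ->
  forall p1 p2, ClSet (fun q1 => S (q1, p2)) /\ ClSet (fun q2 => S (p1, q2)).
Proof.
  intros [H|H] p1 p2; [exact (proj2 H p1 p2)|].
  split; [exists (ltop L1)|exists (ltop L2)]; (split; [right; reflexivity|]);
    intro; split; intro; auto; apply le_top.
Qed.

Lemma pi_iff (L1 L2 : CLat) (P : At L1 * At L2 -> Prop) (a1 : L1) (a2 : L2) Ha Hb :
  (forall (H1 : atom a1) (H2 : atom a2), P (exist _ a1 H1, exist _ a2 H2)) <->
  P (exist _ a1 Ha, exist _ a2 Hb).
Proof.
  split; [intro H; apply H|intros H H1 H2].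
  rewrite (proof_irrelevance _ H1 Ha), (proof_irrelevance _ H2 Hb); exact H.
Qed.

Lemma Fc_bot (L1 L2 : CalObj) (C : star L1 L2) : Fc C (lbot L1) = ltop L2.
Proof.
  unfold Fc. apply lsup_atoms_eq; [exact (c_at L2)|]. intros p Hp; split; [intro; apply le_top|].
  intros _ H1; elim (not_atom_bot H1).
Qed.

Lemma Gc_bot (L1 L2 : CalObj) (C : star L1 L2) : Gc C (lbot L2) = ltop L1.
Proof.
  unfold Gc. apply lsup_atoms_eq; [exact (c_at L1)|]. intros p Hp; split; [intro; apply le_top|].
  intros _ ? H1; elim (not_atom_bot H1).
Qed.

Lemma Fc_spec (L1 L2 : CalObj) (C : star L1 L2) (HC : coatom C \/ C = ltop (star L1 L2))
  (a1 : L1) (Ha : atom a1) :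
  (coatom (Fc C a1) \/ Fc C a1 = ltop L2) /\
  forall q2 (Hq : atom q2), lle q2 (Fc C a1) <-> proj1_sig C (exist _ a1 Ha, exist _ q2 Hq).
Proof.
  destruct (classic (exists q : L2, atom q)) as [[q Hq]|N].
  - destruct (proj2 (starGen_cl (coatom_or_top_gen HC) (exist _ a1 Ha) (exist _ q Hq))) as [b [Hb Eb]].
    assert (E : Fc C a1 = b).
    { unfold Fc. apply lsup_atoms_eq; [exact (c_at L2)|]. intros p Hp.
      rewrite (pi_iff (proj1_sig C) Ha Hp). exact (Eb (exist _ p Hp)). }
    rewrite E. split; [exact Hb|]. intros q2 Hq2. symmetry; exact (Eb (exist _ q2 Hq2)).
  - split; [right; apply (trivial_lat (c_at L2)); intros p Hp; apply N; eauto|].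
    intros q2 Hq2; elim N; eauto.
Qed.

Lemma Gc_spec (L1 L2 : CalObj) (C : star L1 L2) (HC : coatom C \/ C = ltop (star L1 L2))
  (a2 : L2) (Ha : atom a2) :
  (coatom (Gc C a2) \/ Gc C a2 = ltop L1) /\
  forall q1 (Hq : atom q1), lle q1 (Gc C a2) <-> proj1_sig C (exist _ q1 Hq, exist _ a2 Ha).
Proof.
  destruct (classic (exists q : L1, atom q)) as [[q Hq]|N].
  - destruct (proj1 (starGen_cl (coatom_or_top_gen HC) (exist _ q Hq) (exist _ a2 Ha))) as [b [Hb Eb]].
    assert (E : Gc C a2 = b).
    { unfold Gc. apply lsup_atoms_eq; [exact (c_at L1)|]. intros p Hp.
      rewrite (pi_iff (proj1_sig C) Hp Ha). exact (Eb (exist _ p Hp)). }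
    rewrite E. split; [exact Hb|]. intros q1 Hq1. symmetry; exact (Eb (exist _ q1 Hq1)).
  - split; [right; apply (trivial_lat (c_at L1)); intros p Hp; apply N; eauto|].
    intros q1 Hq1; elim N; eauto.
Qed.

Lemma Fc_ok (L1 L2 : CalObj) (C : cX (FObj (star L1 L2))) (a : cA (FObj L1)) :
  coatom (Fc (proj1_sig C) (proj1_sig a)) \/ Fc (proj1_sig C) (proj1_sig a) = ltop L2.
Proof.
  destruct a as [a [Ha| ->]]; simpl.
  - exact (proj1 (Fc_spec (proj2_sig C) Ha)).
  - right; apply Fc_bot.
Qed.

Lemma Gc_ok (L1 L2 : CalObj) (C : cX (FObj (star L1 L2))) (a : cA (FObj L2)) :
  coatom (Gc (proj1_sig C) (proj1_sig a)) \/ Gc (proj1_sig C) (proj1_sig a) = ltop L1.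
Proof.
  destruct a as [a [Ha| ->]]; simpl.
  - exact (proj1 (Gc_spec (proj2_sig C) Ha)).
  - right; apply Gc_bot.
Qed.

Lemma FG_adj (L1 L2 : CalObj) (C : cX (FObj (star L1 L2))) (a : cA (FObj L1)) (y : cA (FObj L2)) :
  lle (proj1_sig y) (Fc (proj1_sig C) (proj1_sig a)) <->
  lle (proj1_sig a) (Gc (proj1_sig C) (proj1_sig y)).
Proof.
  destruct a as [a [Ha| ->]], y as [y [Hy| ->]]; simpl;
    try (rewrite Fc_bot); try (rewrite Gc_bot); try (split; intro; first [apply le_top|apply bot_le]).
  rewrite (proj2 (Fc_spec (proj2_sig C) Ha) y Hy), (proj2 (Gc_spec (proj2_sig C) Hy) a Ha).
  tauto.
Qed.

Lemma bdec_iff (P Q : Prop) : (P <-> Q) -> bdec P = bdec Q.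
Proof. intro H. f_equal. apply propositional_extensionality; exact H. Qed.

Definition alphaX (L1 L2 : CalObj) (C : cX (FObj (star L1 L2))) :
  ChuArr (FObj L1) (chu_dual (FObj L2)).
Proof.
  refine {| cf := fun a : cA (FObj L1) =>
                    exist _ (Fc (proj1_sig C) (proj1_sig a)) (Fc_ok C a) : cA (chu_dual (FObj L2));
            cg := fun y : cX (chu_dual (FObj L2)) =>
                    exist _ (Gc (proj1_sig C) (proj1_sig y)) (Gc_ok C y) : cX (FObj L1) |}.
  - apply sig_ext; simpl; apply Fc_bot.
  - apply sig_ext; simpl; apply Gc_bot.
  - intros a y; simpl. f_equal. apply bdec_iff. apply FG_adj.
Defined.

Lemma bij_iso (U V : ChuObj) (u : ChuArr U V) :
  (forall b, exists a, cf u a = b) -> (forall a a', cf u a = cf u a' -> a = a') ->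
  (forall x, exists y, cg u y = x) -> (forall y y', cg u y = cg u y' -> y = y') ->
  chu_is_iso u.
Proof.
  intros Hfs Hfi Hgs Hgi.
  set (fi := fun b => proj1_sig (constructive_indefinite_description _ (Hfs b))).
  assert (Efi : forall b, cf u (fi b) = b)
    by (intro b; exact (proj2_sig (constructive_indefinite_description _ (Hfs b)))).
  set (gi := fun x => proj1_sig (constructive_indefinite_description _ (Hgs x))).
  assert (Egi : forall x, cg u (gi x) = x)
    by (intro x; exact (proj2_sig (constructive_indefinite_description _ (Hgs x)))).
  assert (c1 : fi (cA0 V) = cA0 U) by (apply Hfi; rewrite Efi; symmetry; apply cf0).
  assert (c2 : gi (cX0 U) = cX0 V) by (apply Hgi; rewrite Egi; symmetry; apply cg0).
  assert (c3 : forall b y, cr U (fi b) y = cr V b (gi y)).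
  { intros b y. rewrite <- (Efi b) at 2. rewrite (cadj u). rewrite Egi. reflexivity. }
  exists {| cf := fi; cg := gi; cf0 := c1; cg0 := c2; cadj := c3 |}.
  split; split; simpl; intros.
  - apply Hfi; apply Efi.
  - apply Egi.
  - apply Efi.
  - apply Hgi; apply Egi.
Qed.

Lemma nz_atom (L : CLat) (a : cA (FObj L)) : a <> cA0 (FObj L) -> atom (proj1_sig a).
Proof.
  destruct a as [a [Ha|Ha]]; intro N; [exact Ha|].
  elim N. apply sig_ext. exact Ha.
Qed.

Definition alphaA (L1 L2 : CalObj) (a : cA (tensor (FObj L1) (FObj L2))) : cA (FObj (star L1 L2)) :=
  match a with
  | None => cA0 (FObj (star L1 L2))
  | Some (a1, a2) =>
      exist _ (singE (exist _ (proj1_sig (proj1_sig a1)) (nz_atom (proj2_sig a1)))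
                     (exist _ (proj1_sig (proj1_sig a2)) (nz_atom (proj2_sig a2))))
              (or_introl (singE_atom _ _))
  end.

Lemma Fc_top (L1 L2 : CalObj) (a : L1) : Fc (ltop (star L1 L2)) a = ltop L2.
Proof.
  unfold Fc. apply lsup_atoms_eq; [exact (c_at L2)|]. intros p Hp; split; intro;
    [apply le_top|intros; apply star_top_set].
Qed.

Lemma Gc_top (L1 L2 : CalObj) (a : L2) : Gc (ltop (star L1 L2)) a = ltop L1.
Proof.
  unfold Gc. apply lsup_atoms_eq; [exact (c_at L1)|]. intros p Hp; split; intro;
    [apply le_top|intros; apply star_top_set].
Qed.

Lemma sing_le (L1 L2 : CalObj) p1 p2 (C : star L1 L2) :
  lle (singE p1 p2) C <-> proj1_sig C (p1, p2).
Proof.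
  split; [intro H; apply H; reflexivity|intros H q Hq; simpl in Hq; unfold sing in Hq; subst; exact H].
Qed.

Definition alpha (L1 L2 : CalObj) : ChuArr (tensor (FObj L1) (FObj L2)) (FObj (star L1 L2)).
Proof.
  refine {| cf := @alphaA L1 L2; cg := @alphaX L1 L2 |}.
  - reflexivity.
  - apply chuarr_ext; intro; apply sig_ext; simpl; [apply Fc_top|apply Gc_top].
  - intros [[a1 a2]|] y.
    + simpl. f_equal. apply bdec_iff. etransitivity; [apply sing_le|].
      symmetry; apply (proj2 (Gc_spec (proj2_sig y) (nz_atom (proj2_sig a2)))).
    + exact (cr0A (FObj (star L1 L2)) y).
Defined.

Lemma atom_nz (L : CLat) (p : L) (Hp : atom p) :
  (exist _ p (or_introl Hp) : cA (FObj L)) <> cA0 (FObj L).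
Proof. intro E. apply (f_equal (@proj1_sig _ _)) in E. simpl in E. exact (atom_not_bot Hp E). Qed.

Arguments atom_nz [L p] Hp.

Lemma bdec_eq_iff (P Q : Prop) : negb (bdec P) = negb (bdec Q) -> (P <-> Q).
Proof.
  unfold bdec. destruct (excluded_middle_informative P), (excluded_middle_informative Q);
    simpl; intro E; try discriminate; tauto.
Qed.

Lemma chu_adj (L1 L2 : CLat) (h : ChuArr (FObj L1) (chu_dual (FObj L2))) a y :
  lle (proj1_sig y) (proj1_sig (cf h a)) <-> lle (proj1_sig a) (proj1_sig (cg h y)).
Proof. apply bdec_eq_iff. exact (cadj h a y). Qed.

Definition Rh (L1 L2 : CLat) (h : ChuArr (FObj L1) (chu_dual (FObj L2))) (q : At L1 * At L2) : Prop :=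
  lle (proj1_sig (snd q))
      (proj1_sig (cf h (exist _ (proj1_sig (fst q)) (or_introl (proj2_sig (fst q))) : cA (FObj L1)))).

Lemma Rh_gen (L1 L2 : CLat) (h : ChuArr (FObj L1) (chu_dual (FObj L2))) : starGen (Rh h).
Proof.
  destruct (classic (forall q, Rh h q)) as [A|A]; [right; exact A|left].
  split; [apply not_all_ex_not; exact A|].
  intros p1 p2. split.
  - exists (proj1_sig (cg h (exist _ (proj1_sig p2) (or_introl (proj2_sig p2)) : cA (FObj L2)))).
    split; [apply proj2_sig|]. intro q1. unfold Rh; simpl.
    exact (chu_adj h (exist _ _ (or_introl (proj2_sig q1))) (exist _ _ (or_introl (proj2_sig p2)))).
  - exists (proj1_sig (cf h (exist _ (proj1_sig p1) (or_introl (proj2_sig p1)) : cA (FObj L1)))).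
    split; [apply proj2_sig|]. intro q2. unfold Rh; simpl. reflexivity.
Qed.

Lemma alpha_iso (L1 L2 : CalObj) : chu_is_iso (alpha L1 L2).
Proof.
  apply bij_iso.
  - intros [C [HC|HC]].
    + destruct (star_atom_sing HC) as [[p1 Hp1] [[p2 Hp2] E]].
      exists (Some (exist _ (exist _ p1 (or_introl Hp1)) (atom_nz Hp1),
                    exist _ (exist _ p2 (or_introl Hp2)) (atom_nz Hp2))).
      apply sig_ext; simpl. rewrite E. f_equal; apply sig_ext; reflexivity.
    + exists None. apply sig_ext; simpl. symmetry; exact HC.
  - intros [[a1 a2]|] [[b1 b2]|] E; simpl in E.
    + apply (f_equal (@proj1_sig _ _)) in E; simpl in E.
      destruct (singE_inj E) as [E1 E2].
      apply (f_equal (@proj1_sig _ _)) in E1; apply (f_equal (@proj1_sig _ _)) in E2. simpl in E1, E2.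
      f_equal; f_equal; apply sig_ext; apply sig_ext; assumption.
    + apply (f_equal (@proj1_sig _ _)) in E; simpl in E.
      elim (atom_not_bot (singE_atom _ _) E).
    + apply (f_equal (@proj1_sig _ _)) in E; simpl in E.
      elim (atom_not_bot (singE_atom _ _) (eq_sym E)).
    + reflexivity.
  - intro h.
    set (E := exist _ (Rh h) (gen_closed (Rh_gen h)) : star L1 L2).
    assert (HE : coatom E \/ E = ltop (star L1 L2)).
    { destruct (Rh_gen h) as [A|A].
      - left. apply (starCo_coatom (S := Rh h)); [intro; simpl; tauto|exact A].
      - right. apply star_eq_top. exact A. }
    exists (exist _ E HE). apply chuarr_ext.
    + intro a. apply sig_ext. simpl. destruct a as [a [Ha|Ha]].
      * unfold Fc. apply lsup_atoms_eq; [exact (c_at L2)|]. intros p Hp.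
        rewrite (pi_iff (proj1_sig E) Ha Hp). simpl. unfold Rh; simpl. reflexivity.
      * assert (Ea : (exist _ a (or_intror Ha) : cA (FObj L1)) = cA0 (FObj L1)) by (apply sig_ext; exact Ha).
        rewrite Ea, (cf0 h). simpl. apply Fc_bot.
    + intro y. apply sig_ext. simpl. destruct y as [y [Hy|Hy]].
      * unfold Gc. apply lsup_atoms_eq; [exact (c_at L1)|]. intros p Hp.
        rewrite (pi_iff (proj1_sig E) Hp Hy). simpl. unfold Rh; simpl.
        apply (chu_adj h (exist _ p (or_introl Hp)) (exist _ y (or_introl Hy))).
      * assert (Ey : (exist _ y (or_intror Hy) : cA (FObj L2)) = cA0 (FObj L2)) by (apply sig_ext; exact Hy).
        rewrite Ey. rewrite (cg0 h : cg h (cA0 (FObj L2)) = cX0 (FObj L1)). simpl. apply Gc_bot.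
  - intros y y' E. apply sig_ext. apply star_ext. intros [[p1 H1] [p2 H2]].
    assert (EF : Fc (proj1_sig y) p1 = Fc (proj1_sig y') p1).
    { apply (f_equal (fun k : ChuArr (FObj L1) (chu_dual (FObj L2)) => proj1_sig (cf k (exist _ p1 (or_introl H1) : cA (FObj L1))))) in E.
      exact E. }
    rewrite <- (proj2 (Fc_spec (proj2_sig y) H1) p2 H2).
    rewrite <- (proj2 (Fc_spec (proj2_sig y') H1) p2 H2).
    rewrite EF. reflexivity.
Qed.

Lemma eq_by_atoms (L : CLat) (Hat : atomistic L) (x y : L) :
  (forall p, atom p -> (lle p x <-> lle p y)) -> x = y.
Proof.
  intro H. apply lle_anti; apply le_by_atoms; auto; intros p Hp; apply H; auto.
Qed.


Lemma h_sing (L1 L2 M1 M2 : CalObj) (f1 : CalArr L1 M1) (f2 : CalArr L2 M2)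
  (h : CalArr (star L1 L2) (star M1 M2)) (H : is_star_arr f1 f2 h)
  (p1 : At L1) (p2 : At L2) (Hf1 : atom (f1 (proj1_sig p1))) (Hf2 : atom (f2 (proj1_sig p2))) :
  h (singE p1 p2) = singE (exist _ _ Hf1) (exist _ _ Hf2).
Proof.
  apply star_ext. intro q.
  rewrite (proj1 (H p1 p2 (singE p1 p2) (fun q => iff_refl _)) (exist _ _ Hf1) (exist _ _ Hf2)
             eq_refl eq_refl q).
  simpl; unfold sing. reflexivity.
Qed.

Lemma h_sing_bot (L1 L2 M1 M2 : CalObj) (f1 : CalArr L1 M1) (f2 : CalArr L2 M2)
  (h : CalArr (star L1 L2) (star M1 M2)) (H : is_star_arr f1 f2 h)
  (p1 : At L1) (p2 : At L2) :
  f1 (proj1_sig p1) = lbot M1 \/ f2 (proj1_sig p2) = lbot M2 ->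
  h (singE p1 p2) = lbot (star M1 M2).
Proof. intro A. exact (proj2 (H p1 p2 (singE p1 p2) (fun q => iff_refl _)) A). Qed.

Arguments h_sing [L1 L2 M1 M2 f1 f2 h] H p1 p2 Hf1 Hf2.
Arguments h_sing_bot [L1 L2 M1 M2 f1 f2 h] H p1 p2 _.

Lemma nat_F (L1 L2 M1 M2 : CalObj) (f1 : CalArr L1 M1) (f2 : CalArr L2 M2)
  (h : CalArr (star L1 L2) (star M1 M2)) (H : is_star_arr f1 f2 h)
  (Y : star M1 M2) (HY : coatom Y \/ Y = ltop (star M1 M2))
  (a : L1) (Ha : atom a \/ a = lbot L1) :
  Fc (radj h Y) a = radj f2 (Fc Y (f1 a)).
Proof.
  assert (HR : coatom (radj h Y) \/ radj h Y = ltop (star L1 L2)).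
  { destruct HY as [A| ->]; [apply acoatom; exact A|right; apply radj_top]. }
  destruct Ha as [Ha| ->].
  2:{ rewrite Fc_bot, arr_bot, Fc_bot, radj_top. reflexivity. }
  apply (eq_by_atoms (c_at L2)). intros q Hq.
  rewrite (proj2 (Fc_spec HR Ha) q Hq).
  rewrite <- (arr_galois f2).
  rewrite <- (sing_le (exist _ a Ha) (exist _ q Hq) (radj h Y)).
  rewrite <- (arr_galois h).
  destruct (aatom f1 Ha) as [A1|A1].
  - destruct (aatom f2 Hq) as [A2|A2].
    + rewrite (h_sing H (exist _ a Ha) (exist _ q Hq) A1 A2).
      rewrite sing_le. simpl. rewrite (proj2 (Fc_spec HY A1) _ A2). reflexivity.
    + rewrite (h_sing_bot H (exist _ a Ha) (exist _ q Hq) (or_intror A2)).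
      rewrite A2. split; intro; apply bot_le.
  - rewrite (h_sing_bot H (exist _ a Ha) (exist _ q Hq) (or_introl A1)).
    rewrite A1, Fc_bot. split; intro; [apply le_top|apply bot_le].
Qed.

Lemma nat_G (L1 L2 M1 M2 : CalObj) (f1 : CalArr L1 M1) (f2 : CalArr L2 M2)
  (h : CalArr (star L1 L2) (star M1 M2)) (H : is_star_arr f1 f2 h)
  (Y : star M1 M2) (HY : coatom Y \/ Y = ltop (star M1 M2))
  (a : L2) (Ha : atom a \/ a = lbot L2) :
  Gc (radj h Y) a = radj f1 (Gc Y (f2 a)).
Proof.
  assert (HR : coatom (radj h Y) \/ radj h Y = ltop (star L1 L2)).
  { destruct HY as [A| ->]; [apply acoatom; exact A|right; apply radj_top]. }
  destruct Ha as [Ha| ->].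
  2:{ rewrite Gc_bot, arr_bot, Gc_bot, radj_top. reflexivity. }
  apply (eq_by_atoms (c_at L1)). intros q Hq.
  rewrite (proj2 (Gc_spec HR Ha) q Hq).
  rewrite <- (arr_galois f1).
  rewrite <- (sing_le (exist _ q Hq) (exist _ a Ha) (radj h Y)).
  rewrite <- (arr_galois h).
  destruct (aatom f2 Ha) as [A2|A2].
  - destruct (aatom f1 Hq) as [A1|A1].
    + rewrite (h_sing H (exist _ q Hq) (exist _ a Ha) A1 A2).
      rewrite sing_le. simpl. rewrite (proj2 (Gc_spec HY A2) _ A1). reflexivity.
    + rewrite (h_sing_bot H (exist _ q Hq) (exist _ a Ha) (or_introl A1)).
      rewrite A1. split; intro; apply bot_le.
  - rewrite (h_sing_bot H (exist _ q Hq) (exist _ a Ha) (or_intror A2)).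
    rewrite A2, Gc_bot. split; intro; [apply le_top|apply bot_le].
Qed.

Lemma alpha_nat (L1 L2 M1 M2 : CalObj) (f1 : CalArr L1 M1) (f2 : CalArr L2 M2)
  (h : CalArr (star L1 L2) (star M1 M2)) :
  is_star_arr f1 f2 h ->
  arr_eq (chu_comp (FArr h) (alpha L1 L2))
         (chu_comp (alpha M1 M2) (tensor_arr (FArr f1) (FArr f2))).
Proof.
  intro H. split.
  - intros [[a1 a2]|].
    + simpl. unfold tens_cf.
      destruct (excluded_middle_informative _) as [e1|n1].
      * apply sig_ext; simpl. apply (f_equal (@proj1_sig _ _)) in e1. simpl in e1.
        apply (h_sing_bot H); left; exact e1.
      * destruct (excluded_middle_informative _) as [e2|n2].
        -- apply sig_ext; simpl. apply (f_equal (@proj1_sig _ _)) in e2. simpl in e2.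
           apply (h_sing_bot H); right; exact e2.
        -- apply sig_ext; simpl. apply (h_sing H).
    + apply sig_ext. exact (arr_bot h).
  - intro y. apply chuarr_ext.
    + intro a. apply sig_ext. simpl. apply nat_F; [exact H|exact (proj2_sig y)|exact (proj2_sig a)].
    + intro b. apply sig_ext. simpl. apply nat_G; [exact H|exact (proj2_sig y)|exact (proj2_sig b)].
Qed.

Lemma arr_eq_eq (U V : ChuObj) (u v : ChuArr U V) : arr_eq u v -> u = v.
Proof. intros [A B]; apply chuarr_ext; auto. Qed.

Lemma iso_comp (U V W : ChuObj) (u : ChuArr U V) (v : ChuArr V W) :
  chu_is_iso u -> chu_is_iso v -> chu_is_iso (chu_comp v u).
Proof.
  intros [u' [[A1 A2] [B1 B2]]] [v' [[C1 C2] [D1 D2]]].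
  exists (chu_comp u' v'). simpl in *. split; split; simpl; intros.
  - rewrite C1. apply A1.
  - rewrite C2. apply A2.
  - rewrite B1. apply D1.
  - rewrite B2. apply D2.
Qed.

Lemma tens_cf_comp (U1 U2 V1 V2 W1 W2 : ChuObj) (u : ChuArr U1 V1) (u' : ChuArr V1 W1)
  (v : ChuArr U2 V2) (v' : ChuArr V2 W2) a :
  tens_cf (chu_comp u' u) (chu_comp v' v) a = tens_cf u' v' (tens_cf u v a).
Proof.
  destruct a as [[[a1 n1] [a2 n2]]|]; [|reflexivity].
  assert (F1 := cf0 u'). assert (F2 := cf0 v').
  unfold tens_cf; simpl.
  repeat match goal with |- context [excluded_middle_informative ?P] =>
    destruct (excluded_middle_informative P) end; simpl;
  try reflexivity; try (exfalso; simpl in *; congruence).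
  f_equal; f_equal; apply sig_ext; reflexivity.
Qed.

Lemma tens_cf_id (U1 U2 : ChuObj) a : tens_cf (chu_id U1) (chu_id U2) a = a.
Proof.
  destruct a as [[[a1 n1] [a2 n2]]|]; [|reflexivity].
  unfold tens_cf; simpl.
  repeat match goal with |- context [excluded_middle_informative ?P] =>
    destruct (excluded_middle_informative P) end; simpl; try (exfalso; simpl in *; congruence).
  f_equal; f_equal; apply sig_ext; reflexivity.
Qed.

Lemma tens_cg_comp (U1 U2 V1 V2 W1 W2 : ChuObj) (u : ChuArr U1 V1) (u' : ChuArr V1 W1)
  (v : ChuArr U2 V2) (v' : ChuArr V2 W2) h :
  tens_cg (chu_comp u' u) (chu_comp v' v) h = tens_cg u v (tens_cg u' v' h).
Proof. apply chuarr_ext; reflexivity. Qed.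

Lemma tens_cg_id (U1 U2 : ChuObj) h : tens_cg (chu_id U1) (chu_id U2) h = h.
Proof. apply chuarr_ext; reflexivity. Qed.

Lemma tensor_iso (U1 U2 V1 V2 : ChuObj) (u : ChuArr U1 V1) (v : ChuArr U2 V2) :
  chu_is_iso u -> chu_is_iso v -> chu_is_iso (tensor_arr u v).
Proof.
  intros [u' [A B]] [v' [C D]].
  apply arr_eq_eq in A, B, C, D.
  exists (tensor_arr u' v'). split; split; simpl; intros.
  - rewrite <- tens_cf_comp, A, C. apply tens_cf_id.
  - rewrite <- tens_cg_comp, A, C. apply tens_cg_id.
  - rewrite <- tens_cf_comp, B, D. apply tens_cf_id.
  - rewrite <- tens_cg_comp, B, D. apply tens_cg_id.
Qed.

Theorem lemma5p4 :
  (exists alpha : forall L1 L2 : CalObj,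
       ChuArr (tensor (FObj L1) (FObj L2)) (FObj (star L1 L2)),
     (forall L1 L2 : CalObj, chu_is_iso (alpha L1 L2)) /\
     (forall (L1 L2 M1 M2 : CalObj) (f1 : CalArr L1 M1) (f2 : CalArr L2 M2)
        (h : CalArr (star L1 L2) (star M1 M2)),
        is_star_arr f1 f2 h ->
        arr_eq (chu_comp (FArr h) (alpha L1 L2))
               (chu_comp (alpha M1 M2) (tensor_arr (FArr f1) (FArr f2))))) /\
  (forall U V : ChuObj,
     (exists L : CalObj, chu_iso U (FObj L)) ->
     (exists L : CalObj, chu_iso V (FObj L)) ->
     exists L : CalObj, chu_iso (tensor U V) (FObj L)).
Proof.
  split.
  - exists alpha. split; [apply alpha_iso|]. intros; apply alpha_nat; auto.
  - intros U V [L1 [u Hu]] [L2 [v Hv]]. exists (starObj L1 L2).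
    exists (chu_comp (alpha L1 L2) (tensor_arr u v)).
    apply iso_comp; [apply tensor_iso; auto|apply alpha_iso].
Qed.
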